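(* Let $(X,d)$ be a separable metric space, $f:X\to X$ a Borel measurable map, and $A\subset X$ a Borel set such that $f$ is Lyapunov stable on $A$. Then $\mu(A)=0$ for every Borel probability measure $\mu$ that is an expansive measure of $f$.
   Context: $f$ is Lyapunov stable on $A$ if for every $x\in A$ and every $\epsilon>0$ there is a neighborhood $U(x)$ of $x$ such that $d(f^n(x),f^n(y))<\epsilon$ for all $n\ge0$ and all $y\in U(x)\cap A$. A Borel probability measure $\mu$ (not necessarily invariant) is an expansive measure of $f$ if there is $\delta>0$ with $\mu(\Phi_\delta(x))=0$ for all $x\in X$, where $\Phi_\delta(x)=\{y\in X: d(f^i(y),f^i(x))\le\delta \text{ for all } i\in\mathbb{N}\}$, $\mathbb{N}=\{0,1,2,\dots\}$. *)

(* Defs.v *)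
From HB Require Import structures.
From mathcomp Require Import all_boot all_order all_algebra.
From mathcomp Require Import all_classical all_reals all_analysis.
Set Implicit Arguments. Unset Strict Implicit. Unset Printing Implicit Defensive.
Import Order.TTheory GRing.Theory Num.Theory.
Local Open Scope classical_set_scope.
Local Open Scope ring_scope.

Section metric_defs.
Variables (R : realType) (X : Type) (d : X -> X -> R).

Definition is_metric : Prop :=
  [/\ forall x y, d x y = 0 <-> x = y,
      forall x y, d x y = d y x &
      forall x y z, d x z <= d x y + d y z].

Definition metric_open (U : set X) : Prop :=
  forall x, U x -> exists2 r : R, 0 < r & forall y, d x y < r -> U y.

Definition separable : Prop :=
  exists D : set X, countable D /\
    forall x (e : R), 0 < e -> exists y, D y /\ d x y < e.

Definition lyapunov_stable (f : X -> X) (A : set X) : Prop :=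
  forall x, A x -> forall e : R, 0 < e ->
    exists U : set X, [/\ metric_open U, U x &
      forall (n : nat) y, U y -> A y -> d (iter n f x) (iter n f y) < e].

Definition Phi (f : X -> X) (delta : R) (x : X) : set X :=
  [set y | forall i : nat, d (iter i f y) (iter i f x) <= delta].

End metric_defs.

Definition borelType (R : realType) (X : pointedType) (d : X -> X -> R) :=
  g_sigma_algebraType (metric_open d).

Definition expansive_measure (R : realType) (X : pointedType) (d : X -> X -> R)
    (f : X -> X) (mu : set (borelType d) -> \bar R) : Prop :=
  exists2 delta : R, 0 < delta & forall x : X, mu (Phi d f delta x) = 0%E.

(* Main.v *)
Require Import Defs.
From HB Require Import structures.
From mathcomp Require Import all_boot all_order all_algebra.
From mathcomp Require Import all_classical all_reals all_analysis.
From mathcomp Require Import lra.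
Import Order.TTheory GRing.Theory Num.Theory.
Local Open Scope classical_set_scope.
Local Open Scope ring_scope.

Lemma open_meas (R : realType) (X : pointedType) (d : X -> X -> R) (U : set X) :
  metric_open d U -> measurable (U : set (borelType d)).
Proof. by move=> oU; apply: sub_sigma_algebra. Qed.

Lemma iter_meas (R : realType) (X : pointedType) (d : X -> X -> R) (f : X -> X) :
  measurable_fun [set: borelType d] (f : borelType d -> borelType d) ->
  forall n, measurable_fun [set: borelType d] (iter n f : borelType d -> borelType d).
Proof.
move=> mf; elim=> [|n IH] /=; first exact: measurable_id.
exact: (measurableT_comp mf IH).
Qed.

Lemma Phi_meas (R : realType) (X : pointedType) (d : X -> X -> R) (f : X -> X) dl x :
  is_metric d ->
  measurable_fun [set: borelType d] (f : borelType d -> borelType d) ->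
  measurable (Phi d f dl x : set (borelType d)).
Proof.
move=> [_ dsym dtri] mf.
have -> : Phi d f dl x = \bigcap_i ((iter i f) @^-1` (~` [set z | dl < d z (iter i f x)])).
  apply/seteqP; split => y /=.
    by move=> H i _ /=; apply/negP; rewrite -leNgt; exact: H.
  by move=> H i; have /negP := H i I; rewrite /= -leNgt.
apply: bigcapT_measurable => i.
rewrite -[X in measurable X]setTI.
apply: (iter_meas _ _ d f mf i measurableT); apply: measurableC; apply: open_meas.
move=> z /= Hz; exists (d z (iter i f x) - dl); first by rewrite subr_gt0.
move=> y Hy; have := dtri z y (iter i f x); lra.
Qed.

Theorem proposition3p4 (R : realType) (X : pointedType) (d : X -> X -> R)
  (f : X -> X) (A : set X) :
  is_metric d -> separable d ->
  measurable_fun [set: borelType d] (f : borelType d -> borelType d) ->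
  measurable (A : set (borelType d)) ->
  lyapunov_stable d f A ->
  forall mu : probability (borelType d) R,
    expansive_measure f mu -> mu A = 0%E.
Proof.
move=> dm [D [cD dD]] mf mA ly mu [dl dl0 muPhi].
have [dpos dsym dtri] := dm.
have [g ginj] := countable_injP _ cD.
pose good (y : X) (m : nat) := exists x, A x /\
  forall z, d y z < m.+1%:R^-1 -> A z -> Phi d f dl x z.
pose E (n m : nat) : set (borelType d) := [set z | A z /\ exists y, [/\ D y, g y = n,
  d y z < m.+1%:R^-1 & good y m]].
have En n m : mu.-negligible (E n m).
  have [[z [Az [y [Dy gy dyz [x [Ax Hx]]]]]]|nE] := pselect (exists z, E n m z); last first.
    apply: (negligibleS _ (negligible_set0 mu)) => z Ez; apply: nE; by exists z.
  apply: (@negligibleS _ _ _ mu (Phi d f dl x : set (borelType d))).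
    move=> w [Aw [y' [Dy' gy' dyw _]]].
    have yy : y' = y by apply: ginj; rewrite ?inE // gy gy'.
    by subst y'; apply: Hx.
  by apply/negligibleP; [exact: Phi_meas|exact: muPhi].
have cov : (A : set (borelType d)) `<=` \bigcup_n \bigcup_m E n m.
  move=> z Az.
  have [U [oU Uz HU]] := ly z Az dl dl0.
  have [r r0 Hr] := oU z Uz.
  have [m Hm] := @ltr_add_invr R 0 (r / 2) ltac:(lra).
  rewrite add0r in Hm.
  have [q [Dq dzq]] := dD z (m.+1%:R^-1) ltac:(by rewrite invr_gt0 ltr0Sn).
  exists (g q) => //; exists m => //; split => //; exists q; split => //.
    by rewrite dsym.
  exists z; split => // w dqw Aw i.
  have : d z w < r.
    have dqw' : d q w < m.+1%:R^-1 :> R := dqw.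
    move: (dtri z q w) Hm dzq dqw'; generalize (m.+1%:R^-1 : R) => t; lra.
  move=> /Hr Uw; have := HU i w Uw Aw; rewrite dsym; lra.
have : mu.-negligible (A : set (borelType d)).
  apply: (negligibleS cov); apply: negligible_bigcup => n.
  by apply: negligible_bigcup => m; exact: En.
by move/(negligibleP mu mA).
Qed.
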